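(* Let $G$ be a claw-free graph. Then either $G$ is a quasi-line graph, or there is a vertex $v$ of $G$ with $$\deg_{G^2}(v)\le \omega(G)^2+\frac{\omega(G)+1}{2}$$ such that $N_G(v)$ is a clique in $(G\setminus v)^2$ (i.e. any two distinct vertices of $N_G(v)$ are at distance at most $2$ in $G\setminus v$).
   Context: Graphs are finite and simple. A graph is claw-free if it has no induced $K_{1,3}$. A graph is a quasi-line graph if for every vertex $v$, the subgraph induced by $N_G(v)$ can be covered by two cliques (its vertex set is a union of two cliques). $G^2$ is the graph on $V(G)$ where distinct vertices are adjacent iff at distance at most $2$ in $G$; $\deg_{G^2}(v)$ is the degree of $v$ in $G^2$. $G\setminus v$ is the graph obtained by deleting $v$. $\omega$ is the clique number. *)

(* Defs.v *)
From mathcomp Require Import all_boot.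
Set Implicit Arguments. Unset Strict Implicit. Unset Printing Implicit Defensive.

Section Graph.
Variables (T : finType) (e : rel T).

Definition simple_graph : Prop := symmetric e /\ irreflexive e.

Definition nbhd (v : T) : {set T} := [set u | e v u].

Definition is_clique (A : {set T}) : Prop :=
  forall x y, x \in A -> y \in A -> x != y -> e x y.

Definition claw_free : Prop :=
  ~ exists v a b c,
      [/\ e v a, e v b, e v c, [&& a != b, a != c & b != c] &
          [&& ~~ e a b, ~~ e a c & ~~ e b c]].

Definition quasi_line : Prop :=
  forall v, exists A B : {set T},
    [/\ is_clique A, is_clique B & nbhd v = A :|: B].

Definition clique_number : nat :=
  \max_(A : {set T} | [forall x in A, forall y in A, (x != y) ==> e x y]) #|A|.

(* distance at most 2 in G \ w (w is deleted), for distinct x y different from w;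
   distance at most 2 in G is the same with no deleted vertex *)
Definition adj2 (x y : T) : bool := e x y || [exists w, e x w && e w y].
Definition adj2_del (v x y : T) : bool :=
  e x y || [exists w, [&& w != v, e x w & e w y]].

Definition deg_sq (v : T) : nat := #|[set u | (u != v) && adj2 v u]|.

Definition nbhd_clique_sq_del (v : T) : Prop :=
  forall x y, x \in nbhd v -> y \in nbhd v -> x != y -> adj2_del v x y.

End Graph.

(* Main.v *)
Require Import Defs.
From mathcomp Require Import all_boot zify.
From Stdlib Require Import ClassicalEpsilon Classical.
Set Implicit Arguments. Unset Strict Implicit. Unset Printing Implicit Defensive.

Definition pb (P : Prop) : bool := if excluded_middle_informative P then true else false.
Lemma pbP (P : Prop) : reflect P (pb P).
Proof. rewrite /pb; case: excluded_middle_informative => h; by constructor. Qed.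

Section Walks.
Variables (T : finType) (H : rel T).
Hypothesis Hsym : symmetric H.

Definition W n x y : Prop := exists f : nat -> T,
  [/\ f 0 = x, f n = y & forall i, i < n -> H (f i) (f i.+1)].

Lemma W0 x : W 0 x x.
Proof. by exists (fun _ => x). Qed.

Lemma W1 x y : H x y -> W 1 x y.
Proof. move=> h; exists (fun i => if i == 0 then x else y); split=> // -[|i] //=. Qed.

Lemma Wcat m n x y z : W m x y -> W n y z -> W (m + n) x z.
Proof.
case=> f [f0 fm fe] [g [g0 gn ge]].
exists (fun i => if i <= m then f i else g (i - m)); split.
- by rewrite leq0n.
- case: n gn ge => [|n] gn ge; first by rewrite addn0 leqnn fm -g0 gn.
  by rewrite ifF ?addKn //; lia.
move=> i lti /=; case: (ltngtP i m) => him.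
- by apply: fe.
- have -> : i.+1 - m = (i - m).+1 by lia.
  apply: ge; lia.
- subst i; rewrite subSnn fm -g0; apply: ge; lia.
Qed.

Lemma Wrev n x y : W n x y -> W n y x.
Proof.
case=> f [f0 fn fe]; exists (fun i => f (n - i)); split.
- by rewrite subn0.
- by rewrite subnn.
move=> i lti; rewrite Hsym.
have -> : n - i = (n - i.+1).+1 by lia.
apply: fe; lia.
Qed.

Lemma Wsub n f : (forall i, i < n -> H (f i) (f i.+1)) ->
  forall a b, a <= b <= n -> W (b - a) (f a) (f b).
Proof.
move=> fe a b /andP[ab bn]; exists (fun i => f (a + i)); split.
- by rewrite addn0.
- by rewrite subnKC.
move=> i lti; rewrite addnS; apply: fe; lia.
Qed.

End Walks.


Section Color.
Variables (T : finType) (H : rel T).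
Hypothesis Hsym : symmetric H.
Hypothesis noodd : forall n x, odd n -> ~ W H n x x.

Definition R x y := exists n, W H n x y.
Definition C x := [set y | pb (R x y)].
Definition root x := odflt x [pick y in C x].

Lemma Rsym x y : R x y -> R y x.
Proof. by case=> n h; exists n; apply: Wrev. Qed.
Lemma Rtr x y z : R x y -> R y z -> R x z.
Proof. by case=> n h [m h']; exists (n + m); apply: Wcat h h'. Qed.

Lemma CR x y : R x y -> C x = C y.
Proof.
move=> rxy; apply/setP => z; rewrite !inE.
by apply/idP/idP => /pbP h; apply/pbP; [apply: Rtr (Rsym rxy) h | apply: Rtr rxy h].
Qed.

Lemma Rroot x : R x (root x).
Proof.
rewrite /root; case: pickP => [y|] /=.
- by rewrite inE => /pbP.
- by move=> _; exists 0; apply: W0.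
Qed.

Lemma root_eq x y : R x y -> root x = root y.
Proof.
move=> h; rewrite /root (CR h); case: pickP => [//|/(_ y)].
by rewrite inE; case: pbP => // -[]; exists 0; apply: W0.
Qed.

Lemma parity_contra x y r n1 n2 : H x y -> W H n1 x r -> W H n2 y r ->
  odd n1 = odd n2 -> False.
Proof.
move=> hxy w1 w2 hp.
have w : W H (n1 + n2 + 1) x x.
  apply: Wcat; first exact: (Wcat w1 (Wrev Hsym w2)).
  by apply: W1; rewrite Hsym.
apply: (noodd _ w); rewrite !oddD hp; by case: (odd n2).
Qed.

Lemma two_color (N : {set T}) : exists A B : {set T},
  [/\ N = A :|: B, (forall x y, x \in A -> y \in A -> ~~ H x y)
   & (forall x y, x \in B -> y \in B -> ~~ H x y)].
Proof.
pose Ev x y := exists n, ~~ odd n /\ W H n x y.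
exists [set x in N | pb (Ev x (root x))], (N :\: [set x in N | pb (Ev x (root x))]).
split.
- apply/setP => z; rewrite !inE; by case: (z \in N); case: pb.
- move=> x y; rewrite !inE => /andP[_ /pbP [n1 [o1 w1]]] /andP[_ /pbP [n2 [o2 w2]]].
  apply/negP => hxy.
  have rr : root y = root x by apply: root_eq; apply: Rsym; exists 1; apply: W1.
  rewrite rr in w2.
  by apply: (parity_contra hxy w1 w2); rewrite (negbTE o1) (negbTE o2).
- move=> x y; rewrite !inE => /andP[hx0 hxN] /andP[hy0 hyN].
  have hx : ~ Ev x (root x) by move=> h; move: hx0; rewrite hxN /=; case: pbP.
  have hy : ~ Ev y (root y) by move=> h; move: hy0; rewrite hyN /=; case: pbP.
  apply/negP => hxy.
  have rr : root y = root x by apply: root_eq; apply: Rsym; exists 1; apply: W1.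
  case: (Rroot x) => n1 w1; case: (Rroot y) => n2; rewrite rr => w2.
  have o1 : odd n1 by apply/negPn/negP => o; apply: hx; exists n1.
  have o2 : odd n2 by apply/negPn/negP => o; apply: hy; rewrite rr; exists n2.
  by apply: (parity_contra hxy w1 w2); rewrite o1 o2.
Qed.

End Color.


Lemma minP (P : nat -> Prop) n : P n -> exists m, P m /\ forall k, k < m -> ~ P k.
Proof.
have : forall b n, n < b -> P n -> exists m, P m /\ forall k, k < m -> ~ P k.
  elim=> [//|b IH] n0 ltn0 Pn.
  case: (classic (exists k, k < n0 /\ P k)) => [[k [lk Pk]]|nk].
  - apply: (IH k) => //; lia.
  - exists n0; split=> // k lk Pk; apply: nk; by exists k.
by move=> h; apply: (h n.+1).
Qed.

Section MinWalk.
Variables (T : finType) (H : rel T).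
Hypothesis Hsym : symmetric H.

Lemma min_odd_walk : (exists n x, odd n /\ W H n x x) ->
  exists n (f : nat -> T), [/\ odd n, f n = f 0, forall i, i < n -> H (f i) (f i.+1)
     & forall m y, m < n -> odd m -> ~ W H m y y].
Proof.
case=> n [x [on wn]].
have [m [[y [om [f [f0 fm fe]]]] mmin]] :=
  @minP (fun n => exists x, odd n /\ W H n x x) n (ex_intro _ x (conj on wn)).
exists m, f; split=> //; first by rewrite fm f0.
by move=> k z lk ok wk; apply: (mmin k lk); exists z.
Qed.

Lemma chord n (f : nat -> T) : odd n -> f n = f 0 ->
  (forall i, i < n -> H (f i) (f i.+1)) ->
  (forall m y, m < n -> odd m -> ~ W H m y y) ->
  forall i j, i < j < n -> H (f i) (f j) -> j = i.+1 \/ (i = 0 /\ j = n.-1).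
Proof.
move=> on fn fe mn i j /andP[ij jn] hij.
case: (ltngtP j i.+1) => [|h|]; [lia| |by left].
case: (boolP ((i == 0) && (j == n.-1))) => [/andP[/eqP -> /eqP ->]|hne]; first by right.
have w1 : W H (j - i + 1) (f i) (f i).
  apply: Wcat; first by apply: (Wsub fe); lia.
  by apply: W1; rewrite Hsym.
have w2 : W H (i + 1 + (n - j)) (f 0) (f 0).
  have a1 : W H (i - 0) (f 0) (f i) by apply: (Wsub fe); lia.
  have a3 : W H (n - j) (f j) (f n) by apply: (Wsub fe); lia.
  rewrite subn0 in a1; rewrite fn in a3.
  exact: Wcat (Wcat a1 (W1 hij)) a3.
have hs : (j - i + 1) + (i + 1 + (n - j)) = n.+2 by lia.
have : odd (j - i + 1) || odd (i + 1 + (n - j)).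
  move: (congr1 odd hs); rewrite oddD /= on; by case: odd; case: odd.
case/orP => o.
- exfalso; apply: (mn _ _ _ o w1); move: hne; rewrite negb_and; case/orP => /eqP; lia.
- exfalso; apply: (mn _ _ _ o w2); lia.
Qed.

End MinWalk.


Section Basic.
Variables (T : finType) (e : rel T).
Hypothesis esym : symmetric e.
Hypothesis eirr : irreflexive e.
Hypothesis cf : claw_free e.

Lemma claw v a b c : e v a -> e v b -> e v c -> a != b -> a != c -> b != c ->
  [|| e a b, e a c | e b c].
Proof.
move=> va vb vc ab ac bc; apply/negPn/negP => h; apply: cf.
exists v, a, b, c; split=> //; first by rewrite ab ac bc.
by move: h; rewrite !negb_or => /andP[-> /andP[-> ->]].
Qed.

Lemma clique_le (A : {set T}) : is_clique e A -> #|A| <= clique_number e.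
Proof.
move=> h; rewrite /clique_number.
apply: (@leq_bigmax_cond _ _ (fun A : {set T} => #|A|) A).
apply/forallP => x; apply/implyP => xA; apply/forallP => y; apply/implyP => yA.
by apply/implyP => xy; apply: h.
Qed.

Lemma ramsey s (A : {set T}) :
  (forall a b c, a \in A -> b \in A -> c \in A -> a != b -> a != c -> b != c ->
     [|| e a b, e a c | e b c]) ->
  (forall B : {set T}, B \subset A -> is_clique e B -> #|B| <= s) ->
  (#|A|).*2 <= s * (s + 3).
Proof.
elim: s A => [|s IH] A tri cl.
  case: (set_0Vmem A) => [-> |[x xA]]; first by rewrite cards0.
  have h1 : is_clique e [set x] by move=> y z; rewrite !inE => /eqP-> /eqP->; rewrite eqxx.
  by have := cl [set x]; rewrite cards1 sub1set xA => /(_ isT h1).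
case: (set_0Vmem A) => [-> |[x xA]]; first by rewrite cards0.
pose A1 := [set y in A | e x y].
pose A2 := [set y in A | (y != x) && ~~ e x y].
have sub : A \subset x |: (A1 :|: A2).
  apply/subsetP => y yA; rewrite !inE yA /=.
  case: (eqVneq y x) => //= _; by case: (e x y).
have c2 : is_clique e A2.
  move=> y z; rewrite !inE => /andP[yA /andP[yx xy]] /andP[zA /andP[zx xz]] yz.
  have := tri x y z xA yA zA; rewrite eq_sym yx eq_sym zx yz => /(_ isT isT isT).
  by rewrite (negbTE xy) (negbTE xz).
have b2 : #|A2| <= s.+1 by apply: cl => //; apply/subsetP => y; rewrite inE => /andP[].
have b1 : (#|A1|).*2 <= s * (s + 3).
  apply: IH.
  - by move=> a b c; rewrite !inE => /andP[aA _] /andP[bA _] /andP[cA _]; apply: tri.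
  - move=> B sB cB.
    have xB : x \notin B by apply/negP => /(subsetP sB); rewrite inE eirr andbF.
    have := cl (x |: B); rewrite cardsU1 xB add1n ltnS; apply.
    + rewrite subUset sub1set xA /=; apply: subset_trans sB _.
      by apply/subsetP => y; rewrite inE => /andP[].
    + move=> y z; rewrite !inE => /orP[/eqP->|yB] /orP[/eqP->|zB]; rewrite ?eqxx //.
      * by move=> _; have := subsetP sB z zB; rewrite inE => /andP[].
      * by move=> _; rewrite esym; have := subsetP sB y yB; rewrite inE => /andP[].
      * by apply: cB.
have := subset_leq_card sub; rewrite cardsU1.
have := (leq_card_setU A1 A2).1.
move: b1 b2; case: (x \notin _) => /=; lia.
Qed.

End Basic.


Section Main.
Variables (T : finType) (e : rel T).
Hypothesis esym : symmetric e.
Hypothesis eirr : irreflexive e.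
Hypothesis cf : claw_free e.
Variable v : T.
Hypothesis nq : ~ exists A B : {set T},
    [/\ is_clique e A, is_clique e B & nbhd e v = A :|: B].

Definition N := nbhd e v.
Definition Hr x y := [&& x \in N, y \in N, x != y & ~~ e x y].

Lemma Hsym : symmetric Hr.
Proof. by move=> x y; rewrite /Hr esym eq_sym; case: (x \in N); case: (y \in N). Qed.

Lemma inN x : (x \in N) = e v x.
Proof. by rewrite inE. Qed.

Lemma adjN x y : x \in N -> y \in N -> x != y -> ~~ Hr x y -> e x y.
Proof. by move=> xN yN xy; rewrite /Hr xN yN xy /= negbK. Qed.

Lemma Htri a b c : Hr a b -> Hr b c -> Hr a c -> False.
Proof.
rewrite /Hr !inN => /and4P[va vb ab nab] /and4P[_ vc bc nbc] /and4P[_ _ ac nac].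
by have := claw cf va vb vc ab ac bc; rewrite (negbTE nab) (negbTE nac) (negbTE nbc).
Qed.

Lemma nbhd_ok : nbhd_clique_sq_del e v.
Proof.
move=> x y; rewrite /nbhd !inE => xN yN xy; rewrite /adj2_del.
case exy: (e x y) => //=.
apply/existsP; apply: NNPP => hno; apply: nq.
exists [set z in N | (z != x) && ~~ e x z], [set z in N | (z != y) && ~~ e y z]; split.
- move=> a b; rewrite !inE => /andP[aN /andP[ax xa]] /andP[bN /andP[bx xb]] ab.
  apply/negPn/negP => nab.
  have := @claw _ _ cf v x a b; move=> /(_ xN aN bN); rewrite eq_sym ax eq_sym bx ab.
  by move=> /(_ isT isT isT); rewrite (negbTE xa) (negbTE xb) (negbTE nab).
- move=> a b; rewrite !inE => /andP[aN /andP[ax xa]] /andP[bN /andP[bx xb]] ab.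
  apply/negPn/negP => nab.
  have := @claw _ _ cf v y a b; move=> /(_ yN aN bN); rewrite eq_sym ax eq_sym bx ab.
  by move=> /(_ isT isT isT); rewrite (negbTE xa) (negbTE xb) (negbTE nab).
- apply/setP => z; rewrite !inE -/N.
  case zN: (e v z) => //=.
  case: (eqVneq z x) => [->|zx] /=; first by rewrite esym exy andbT; move: xy; case: (_ != _).
  case: (eqVneq z y) => [->|zy] /=; first by rewrite exy.
  case exz: (e x z) => //=; case eyz: (e y z) => //=.
  exfalso; apply: hno; exists z; rewrite exz esym eyz !andbT.
  by apply/eqP => zv; move: zN; rewrite zv eirr.
Qed.

Lemma odd_walk : exists n x, odd n /\ W Hr n x x.
Proof.
apply: NNPP => hno.
have [A [B [hN hA hB]]] := two_color Hsym (fun n x o w => hno (ex_intro _ n (ex_intro _ x (conj o w)))) N.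
apply: nq; exists A, B; split; last by [].
- move=> x y xA yA xy; apply: adjN => //; [| |by apply: hA].
  + by rewrite hN inE xA. + by rewrite hN inE yA.
- move=> x y xA yA xy; apply: adjN => //; [| |by apply: hB].
  + by rewrite hN inE xA orbT. + by rewrite hN inE yA orbT.
Qed.


Lemma cycle_exists : exists n (f : nat -> T), [/\ odd n, 4 < n, f n = f 0,
  forall i, i < n -> Hr (f i) (f i.+1)
  & forall i j, i < j < n -> Hr (f i) (f j) -> j = i.+1 \/ (i = 0 /\ j = n.-1)].
Proof.
have [n [f [on fn fe mn]]] := min_odd_walk odd_walk.
exists n, f; split=> //; last by move=> i j; apply: (chord Hsym on fn fe mn).
case: n on fn fe mn => [//|[|[//|[|[//|n]]]]] //= _ fn fe _.
- by have := fe 0 isT; rewrite fn /Hr eqxx !andbF.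
- exfalso; apply: (Htri (b := f 1) (fe 0 isT) (fe 1 isT)).
  by rewrite Hsym -fn; apply: (fe 2).
Qed.


Definition M := [set u | [&& u != v, ~~ e v u & [exists w, e v w && e w u]]].

Section Cyc.
Variables (n : nat) (f : nat -> T).
Hypotheses (on : odd n) (n4 : 4 < n) (fn : f n = f 0)
  (fe : forall i, i < n -> Hr (f i) (f i.+1))
  (fch : forall i j, i < j < n -> Hr (f i) (f j) -> j = i.+1 \/ (i = 0 /\ j = n.-1)).

Definition c (i : 'I_n) := f i.

Lemma fN i : i <= n -> f i \in N.
Proof.
case: (ltngtP i n) => [h _|//|->]; first by have := fe h; rewrite /Hr => /and4P[].
have n0 : 0 < n by apply: leq_trans n4.
by rewrite fn; have := fe n0; rewrite /Hr => /and4P[].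
Qed.

Lemma cN i : c i \in N.
Proof. by apply: fN; apply: ltnW. Qed.

Lemma cedge (i : 'I_n) : Hr (c i) (c (ordS i)).
Proof.
rewrite /c /=; case: (ltngtP i.+1 n) => h.
- by rewrite modn_small //; apply: fe.
- by have := ltn_ord i; lia.
- have -> : i.+1 %% n = 0 by rewrite h modnn.
  by rewrite -fn -(congr1 f h); apply: fe.
Qed.

Lemma cind (i j : 'I_n) : Hr (c i) (c j) -> j = ordS i \/ i = ordS j.
Proof.
have gen : forall i j : 'I_n, i < j -> Hr (c i) (c j) -> j = ordS i \/ i = ordS j.
  move=> i0 j0 lt h; case: (fch (i := i0) (j := j0)) => //.
  - by apply/andP; split; [exact: lt | exact: ltn_ord].
  - move=> h1; left; apply: val_inj; rewrite /= -h1 modn_small // ltn_ord.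
  - case=> h1 h2; right; apply: val_inj; rewrite /= h2 prednK ?modnn //; lia.
case: (ltngtP i j) => h H.
- exact: gen h H.
- by rewrite Hsym in H; case: (gen _ _ h H) => ?; [right|left].
- by move: H; rewrite (val_inj h) /Hr eqxx !andbF.
Qed.

Lemma key w : w \in M -> n <= (#|[set i : 'I_n | e (c i) w]|).*2.+1.
Proof.
rewrite inE => /and3P[wv nvw /existsP[u /andP[vu uw]]].
set D := [set i : 'I_n | e (c i) w].
have n0 : 0 < n by lia.
have wc : forall x, x \in N -> x != w.
  by move=> x xN; apply/eqP => h; move: xN; rewrite h inE (negbTE nvw).
have Dne : exists j, j \in D.
  apply: NNPP => nD.
  have nw : forall i, i <= n -> ~~ e (f i) w.
    move=> i ile; case: (ltngtP i n) => h.
    - by apply/negP => h2; apply: nD; exists (Ordinal h); rewrite inE.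
    - lia.
    - by subst; rewrite fn; apply/negP => h2; apply: nD; exists (Ordinal n0); rewrite inE.
  have uN : u \in N by rewrite inE.
  have uf : forall i, i <= n -> u != f i.
    by move=> i ile; apply/eqP => h; move: (nw i ile); rewrite -h uw.
  have alt : forall i, i < n -> Hr u (f i.+1) = ~~ Hr u (f i).
    move=> i lt; case h1: (Hr u (f i)); case h2: (Hr u (f i.+1)) => //=.
    - by exfalso; apply: (Htri h1 (fe lt) h2).
    - exfalso.
      have e1 : e u (f i) by apply: adjN => //; [apply: fN; lia|apply: uf; lia|rewrite h1].
      have e2 : e u (f i.+1) by apply: adjN => //; [apply: fN; lia|apply: uf; lia|rewrite h2].
      have := @claw _ _ cf u w (f i) (f i.+1) uw e1 e2.
      have fiN : f i \in N by apply: fN; lia.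
      have fi1N : f i.+1 \in N by apply: fN; lia.
      have := fe lt; rewrite /Hr => /and4P[_ _ ff nf].
      rewrite (eq_sym w) (eq_sym w) (wc _ fiN) (wc _ fi1N) ff => /(_ isT isT isT).
      have n1 := nw i (ltnW lt); have n2 := nw i.+1 lt.
      by rewrite esym (negbTE n1) esym (negbTE n2) (negbTE nf).


  have par : forall i, i <= n -> Hr u (f i) = Hr u (f 0) (+) odd i.
    elim=> [|i IH] lt; first by rewrite addbF.
    by rewrite alt // IH ?(ltnW lt) //= addbN.
  by have := par n (leqnn n); rewrite fn on addbT; case: (Hr u (f 0)).
case: Dne => j jD.
have ejw : e (c j) w by move: jD; rewrite inE.
set I := [set i : 'I_n | [&& i \notin D, ordS i != j & i != ordS j]].
have ecj : forall i : 'I_n, i \notin D -> i != ordS j -> j != ordS i -> e (c j) (c i).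
  move=> i iD h1 h2; apply: adjN; rewrite ?cN //.
  - by apply/eqP => h; move: iD; rewrite inE -h ejw.
  - by apply/negP => /cind [h|h]; [move: h1|move: h2]; rewrite h eqxx.
have disj : forall i, i \in I -> ordS i \in I -> False.
  move=> i; rewrite !inE => /and3P[iD ij ji] /and3P[siD sij jsi].
  have e1 : e (c j) (c i) by apply: ecj; [rewrite inE | | rewrite eq_sym].
  have e2 : e (c j) (c (ordS i)) by apply: ecj; [rewrite inE | | rewrite eq_sym].
  have := @claw _ _ cf (c j) w (c i) (c (ordS i)) ejw e1 e2.
  rewrite !(eq_sym w) !wc ?cN //.
  have := cedge i; rewrite /Hr => /and4P[_ _ -> nf].

  by move=> /(_ isT isT isT); rewrite esym (negbTE iD) esym (negbTE siD) (negbTE nf).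
have jS : j != ordS j.
  apply/eqP => /(congr1 val) /=; case: (ltngtP j.+1 n) => h.
  - rewrite modn_small //; lia.
  - by have := ltn_ord j; lia.
  - rewrite h modnn; lia.
have c1 : #|I| + #|(@ordS n) @: I| <= n - 2.
  have dj : I :&: (@ordS n) @: I = set0.
    apply/setP => x; rewrite in_setI in_set0; apply/negP => /andP[xI /imsetP[i iI xe]].
    by apply: (disj i) => //; rewrite -xe.
  have sub : I :|: (@ordS n) @: I \subset ~: [set j; ordS j].
    apply/subsetP => x; rewrite !inE => /orP[|/imsetP[i iI ->]].
    - case/and3P => xD _ xj; rewrite negb_or xj andbT; apply/eqP => h; move: xD; rewrite h ?inE ejw //.
    - move: iI; rewrite inE => /and3P[iD ij _]; rewrite negb_or ij /=.
      by apply/eqP => /ordS_inj h; move: iD; rewrite h ?inE ejw.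
  have := subset_leq_card sub.
  have := cardsC [set j; ordS j]; rewrite cards2 jS card_ord.
  by rewrite cardsU dj cards0 subn0; lia.
have c2 : #|~: D| <= #|I| + 2.
  have sub : ~: D \subset I :|: [set ord_pred j; ordS j].
    apply/subsetP => x; rewrite !inE => xD; rewrite xD /=.
    case: (eqVneq (ordS x) j) => [<-|h1]; first by rewrite ordSK eqxx orbT.
    by case: (eqVneq x (ordS j)) => [->|h2]; rewrite ?eqxx ?orbT.
  apply: leq_trans (subset_leq_card sub) _; apply: leq_trans (leq_card_setU _ _).1 _.
  by rewrite leq_add2l cards2; case: (_ != _).
have c3 : #|D| + #|~: D| = n by rewrite cardsC card_ord.
have ci : #|(@ordS n) @: I| = #|I| by apply: card_imset; apply: ordS_inj.
have := odd_double_half n; rewrite on => hn.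
rewrite ci in c1; lia.
Qed.

Lemma card_pred (I : finType) (P : pred I) : #|[set i | P i]| = \sum_i (P i : nat).
Proof. rewrite -sum1_card big_mkcond /=; apply: eq_bigr => i _; rewrite inE; by case: (P i). Qed.

Lemma Qbound (i : 'I_n) : #|[set w in M | e (c i) w]| < clique_number e.
Proof.
set Q := [set w in M | e (c i) w].
have ciQ : c i \notin Q.
  by rewrite !inE; have := cN i; rewrite inE => ->; rewrite /= andbF.
have := cardsU1 (c i) Q; rewrite ciQ add1n => <-; apply: clique_le.
move=> y z; rewrite !inE => /orP[/eqP->|/andP[yM ey]] /orP[/eqP->|/andP[zM ez]].
- by rewrite eqxx.
- by [].
- by rewrite esym.
- move=> yz; move: yM zM; rewrite ?inE => /and3P[yv nvy _] /and3P[zv nvz _].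
  have vc : e (c i) v by rewrite esym; have := cN i; rewrite inE.
  have := @claw _ _ cf (c i) v y z vc ey ez; rewrite eq_sym yv eq_sym zv yz.
  by rewrite (negbTE nvy) (negbTE nvz) => /(_ isT isT isT).
Qed.

Lemma sumM : n./2 * #|M| <= n * (clique_number e).-1.
Proof.
have h1 : \sum_(w in M) n./2 <= \sum_(w in M) #|[set i : 'I_n | e (c i) w]|.
  apply: leq_sum => w wM; have := key wM; have := odd_double_half n; rewrite on; lia.
rewrite sum_nat_const mulnC in h1; apply: leq_trans h1 _.
have -> : \sum_(w in M) #|[set i : 'I_n | e (c i) w]| =
          \sum_(i : 'I_n) #|[set w in M | e (c i) w]|.
  under eq_bigr => w _ do rewrite card_pred.
  rewrite exchange_big /=; apply: eq_bigr => i _.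
  rewrite card_pred [LHS]big_mkcond /=; apply: eq_bigr => w _.
  by case: (w \in M).
have -> : n * (clique_number e).-1 = \sum_(i : 'I_n) (clique_number e).-1.
  by rewrite sum_nat_const card_ord.
apply: leq_sum => i _; have := Qbound i; lia.
Qed.

End Cyc.

Lemma omega_pos : 0 < clique_number e.
Proof.
have h : is_clique e [set v] by move=> y z; rewrite !inE => /eqP-> /eqP->; rewrite eqxx.
by have := clique_le h; rewrite cards1.
Qed.

Lemma Nbound : (#|N|).*2 <= (clique_number e).-1 * ((clique_number e).-1 + 3).
Proof.
apply: (ramsey esym eirr).
- move=> a b c; rewrite /N /nbhd !inE => va vb vc; exact: (@claw _ _ cf v a b c va vb vc).
- move=> B sB cB.
  have vB : v \notin B by apply/negP => /(subsetP sB); rewrite inE eirr.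
  suff : #|v |: B| <= clique_number e by rewrite cardsU1 vB add1n; have := omega_pos; lia.
  apply: clique_le => y z; rewrite !inE => /orP[/eqP->|yB] /orP[/eqP->|zB]; rewrite ?eqxx //.
  + by move=> _; have := subsetP sB z zB; rewrite inE.
  + by move=> _; rewrite esym; have := subsetP sB y yB; rewrite inE.
  + by apply: cB.
Qed.

Lemma degbound : deg_sq e v <= #|N| + #|M|.
Proof.
apply: leq_trans (leq_card_setU _ _).1.
apply: subset_leq_card; apply/subsetP => u; rewrite !inE /adj2 => /andP[uv /orP[vu|ex]].
- by rewrite vu.
- by case vu: (e v u) => //=; rewrite uv ex.
Qed.

Lemma final_bound : (deg_sq e v).*2 <= (clique_number e ^ 2).*2 + clique_number e + 1.
Proof.
have [n [f [on n4 fn fe fch]]] := cycle_exists.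
have hM := sumM on n4 fn fe fch.
have hN := Nbound; have hD := degbound; have hw := omega_pos.
have := odd_double_half n; rewrite on => hn.
move: hM hN hD hw; rewrite -hn.
set h := n./2; set s := (clique_number e).-1.
have -> : clique_number e = s.+1 by rewrite /s; have := omega_pos; lia.
move=> hM hN hD _.
have h2 : 2 <= h by rewrite /h; lia.
have hM' : 2 * #|M| <= 5 * s by move: hM; rewrite add1n; nia.
nia.
Qed.

End Main.


(* deg <= w^2 + (w+1)/2 is stated multiplied by 2 (exact over nat). *)
Theorem mainTheorem2 (T : finType) (e : rel T) :
  simple_graph e -> claw_free e ->
  quasi_line e \/
  exists v : T,
    (deg_sq e v).*2 <= (clique_number e ^ 2).*2 + clique_number e + 1
    /\ nbhd_clique_sq_del e v.
Proof.
move=> [esym eirr] cf.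
case: (classic (quasi_line e)) => [q|nql]; [by left|right].
have [v nv] : exists v, ~ exists A B : {set T},
    [/\ is_clique e A, is_clique e B & nbhd e v = A :|: B].
  apply: NNPP => h; apply: nql => v; apply: NNPP => h2; apply: h; by exists v.
exists v; split; [exact: (final_bound esym eirr cf nv) | exact: (nbhd_ok esym eirr cf nv)].
Qed.
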